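(* Let $\Lambda<\Gamma$, let $\mathcal R$ be a set of representatives of the cosets $\Lambda\gamma$ with $e\in\mathcal R$, and let $\mathcal H$ be a Hilbert space. For maps $\mu,\mu_1,\mu_2:\Lambda\to U(\mathcal H)$ with induced maps $\overline\mu,\overline\mu_1,\overline\mu_2:\Gamma\to U(\ell^2(\mathcal R,\mathcal H))$ one has: (1) $\mathrm{def}(\overline\mu)=\mathrm{def}(\mu)$; (2) $\|\overline\mu_1-\overline\mu_2\|=\|\mu_1-\mu_2\|$; (3) $D(\overline\mu)\le D(\mu)$.
   Context: Let $r:\Gamma\to\mathcal R$ be the retraction $r(\gamma)=$ the unique element of $\Lambda\gamma\cap\mathcal R$. For $\mu:\Lambda\to U(\mathcal H)$ the induced map $\overline\mu:\Gamma\to U(\ell^2(\mathcal R,\mathcal H))$ is $(\overline\mu(\gamma)f)(x)=\mu(x\gamma\, r(x\gamma)^{-1})\,f(r(x\gamma))$ for $f\in\ell^2(\mathcal R,\mathcal H)$, $x\in\mathcal R$. For maps into $U(\mathcal L)$: $\|\mu-\nu\|=\sup_\gamma\|\mu(\gamma)-\nu(\gamma)\|$ (operator norm), $D(\mu)=\inf\{\|\mu-\nu\|:\nu$ a unitary representation on the same space$\}$, $\mathrm{def}(\mu)=\sup_{x,y}\|\mu(xy)-\mu(x)\mu(y)\|$. *)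

(* Defs.v *)
From Stdlib Require Import Reals List ClassicalEpsilon.
Open Scope R_scope.

Record C := mkC { Cre : R; Cim : R }.
Definition C0 : C := mkC 0 0.
Definition C1 : C := mkC 1 0.
Definition Cadd (a b : C) : C := mkC (Cre a + Cre b) (Cim a + Cim b).
Definition Cmul (a b : C) : C :=
  mkC (Cre a * Cre b - Cim a * Cim b) (Cre a * Cim b + Cim a * Cre b).
Definition Cconj (a : C) : C := mkC (Cre a) (- Cim a).

Record Hilbert := {
  hcar :> Type;
  hzero : hcar;
  hadd : hcar -> hcar -> hcar;
  hopp : hcar -> hcar;
  hscal : C -> hcar -> hcar;
  hinner : hcar -> hcar -> C;
  hadd_assoc : forall x y z, hadd x (hadd y z) = hadd (hadd x y) z;
  hadd_comm : forall x y, hadd x y = hadd y x;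
  hadd_0 : forall x, hadd x hzero = x;
  hadd_opp : forall x, hadd x (hopp x) = hzero;
  hscal_assoc : forall a b x, hscal a (hscal b x) = hscal (Cmul a b) x;
  hscal_1 : forall x, hscal C1 x = x;
  hscal_distr_v : forall a x y, hscal a (hadd x y) = hadd (hscal a x) (hscal a y);
  hscal_distr_s : forall a b x, hscal (Cadd a b) x = hadd (hscal a x) (hscal b x);
  hinner_conj : forall x y, hinner y x = Cconj (hinner x y);
  hinner_add_l : forall x y z, hinner (hadd x y) z = Cadd (hinner x z) (hinner y z);
  hinner_scal_l : forall a x y, hinner (hscal a x) y = Cmul a (hinner x y);
  hinner_pos : forall x, 0 <= Cre (hinner x x);
  hinner_def : forall x, hinner x x = C0 -> x = hzero;
  hcomplete : forall u : nat -> hcar,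
    (forall eps, 0 < eps -> exists N, forall m n, (N <= m)%nat -> (N <= n)%nat ->
        sqrt (Cre (hinner (hadd (u m) (hopp (u n))) (hadd (u m) (hopp (u n))))) < eps) ->
    exists l, forall eps, 0 < eps -> exists N, forall n, (N <= n)%nat ->
        sqrt (Cre (hinner (hadd (u n) (hopp l)) (hadd (u n) (hopp l)))) < eps
}.

Arguments hzero {h}. Arguments hadd {h}. Arguments hopp {h}.
Arguments hscal {h}. Arguments hinner {h}.

Definition hsub {H : Hilbert} (x y : H) : H := hadd x (hopp y).
Definition hnorm {H : Hilbert} (x : H) : R := sqrt (Cre (hinner x x)).

(* least upper bound when it exists (always the case below) *)
Definition Rsup (P : R -> Prop) : R := epsilon (inhabits 0) (fun l => is_lub P l).
Definition Rinf (P : R -> Prop) : R := - Rsup (fun x => P (- x)).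

Record Group := {
  gcar :> Type;
  gmul : gcar -> gcar -> gcar;
  ginv : gcar -> gcar;
  ge : gcar;
  gmul_assoc : forall x y z, gmul x (gmul y z) = gmul (gmul x y) z;
  gmul_e_l : forall x, gmul ge x = x;
  gmul_e_r : forall x, gmul x ge = x;
  gmul_inv_l : forall x, gmul (ginv x) x = ge;
  gmul_inv_r : forall x, gmul x (ginv x) = ge
}.
Arguments gmul {g}. Arguments ginv {g}. Arguments ge {g}.

Definition is_subgroup (G : Group) (Lam : G -> Prop) : Prop :=
  Lam ge /\ (forall x y, Lam x -> Lam y -> Lam (gmul x y)) /\
  (forall x, Lam x -> Lam (ginv x)).

(* Rep is a set of representatives of the right cosets Lam*g:
   each coset Lam*g (= {x | x g^-1 in Lam}) meets Rep in exactly one point *)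
Definition is_transversal (G : Group) (Lam Rep : G -> Prop) : Prop :=
  forall g : G, exists! x, Rep x /\ Lam (gmul x (ginv g)).

Definition RepT {G : Group} (Rep : G -> Prop) : Type := {x : G | Rep x}.

Definition retr {G : Group} (Lam Rep : G -> Prop) (heR : Rep ge) (g : G) : RepT Rep :=
  epsilon (inhabits (exist _ ge heR))
    (fun x : RepT Rep => Lam (gmul (proj1_sig x) (ginv g))).

Definition sqsum {G : Group} {Rep : G -> Prop} {H : Hilbert}
  (f : RepT Rep -> H) (l : list (RepT Rep)) : R :=
  fold_right (fun x acc => hnorm (f x) ^ 2 + acc) 0 l.

Definition finsums {G : Group} {Rep : G -> Prop} {H : Hilbert}
  (f : RepT Rep -> H) : R -> Prop :=
  fun s => exists l : list (RepT Rep),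
    NoDup (map (@proj1_sig _ _) l) /\ s = sqsum f l.

Definition is_l2 {G : Group} {Rep : G -> Prop} {H : Hilbert}
  (f : RepT Rep -> H) : Prop := exists B, forall s, finsums f s -> s <= B.

Definition l2norm {G : Group} {Rep : G -> Prop} {H : Hilbert}
  (f : RepT Rep -> H) : R := sqrt (Rsup (finsums f)).

Definition L2op {G : Group} (Rep : G -> Prop) (H : Hilbert) : Type :=
  (RepT Rep -> H) -> (RepT Rep -> H).

Definition is_unitary {H : Hilbert} (U : H -> H) : Prop :=
  (forall a v w, U (hadd (hscal a v) w) = hadd (hscal a (U v)) (U w)) /\
  (forall v, hnorm (U v) = hnorm v) /\
  (forall w, exists v, U v = w).

Definition is_unitary_l2 {G : Group} {Rep : G -> Prop} {H : Hilbert}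
  (U : L2op Rep H) : Prop :=
  (forall f, is_l2 f -> is_l2 (U f)) /\
  (forall a f g, is_l2 f -> is_l2 g -> forall x,
      U (fun y => hadd (hscal a (f y)) (g y)) x = hadd (hscal a (U f x)) (U g x)) /\
  (forall f, is_l2 f -> l2norm (U f) = l2norm f) /\
  (forall g, is_l2 g -> exists f, is_l2 f /\ forall x, U f x = g x).

Definition opdist {H : Hilbert} (A B : H -> H) : R :=
  Rsup (fun s => exists v : H, hnorm v <= 1 /\ s = hnorm (hsub (A v) (B v))).

Definition opdist_l2 {G : Group} {Rep : G -> Prop} {H : Hilbert}
  (A B : L2op Rep H) : R :=
  Rsup (fun s => exists f, is_l2 f /\ l2norm f <= 1 /\
          s = l2norm (fun x => hsub (A f x) (B f x))).

(* ---------- maps Lam -> U(H) (given as functions on G, only values on Lam matter) *)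
Definition maps_to_U {G : Group} (Lam : G -> Prop) {H : Hilbert} (mu : G -> H -> H) : Prop :=
  forall l, Lam l -> is_unitary (mu l).

Definition is_unitary_rep_sub {G : Group} (Lam : G -> Prop) {H : Hilbert}
  (nu : G -> H -> H) : Prop :=
  maps_to_U Lam nu /\
  (forall x y, Lam x -> Lam y -> forall v, nu (gmul x y) v = nu x (nu y v)).

Definition is_unitary_rep_l2 {G : Group} {Rep : G -> Prop} {H : Hilbert}
  (nu : G -> L2op Rep H) : Prop :=
  (forall g, is_unitary_l2 (nu g)) /\
  (forall x y f, is_l2 f -> forall z, nu (gmul x y) f z = nu x (nu y f) z).

Definition dist_sub {G : Group} (Lam : G -> Prop) {H : Hilbert} (mu nu : G -> H -> H) : R :=
  Rsup (fun s => exists l, Lam l /\ s = opdist (mu l) (nu l)).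

Definition def_sub {G : Group} (Lam : G -> Prop) {H : Hilbert} (mu : G -> H -> H) : R :=
  Rsup (fun s => exists x y, Lam x /\ Lam y /\
          s = opdist (mu (gmul x y)) (fun v => mu x (mu y v))).

Definition D_sub {G : Group} (Lam : G -> Prop) {H : Hilbert} (mu : G -> H -> H) : R :=
  Rinf (fun d => exists nu, is_unitary_rep_sub Lam nu /\ d = dist_sub Lam mu nu).

Definition dist_l2 {G : Group} {Rep : G -> Prop} {H : Hilbert} (mu nu : G -> L2op Rep H) : R :=
  Rsup (fun s => exists g, s = opdist_l2 (mu g) (nu g)).

Definition def_l2 {G : Group} {Rep : G -> Prop} {H : Hilbert} (mu : G -> L2op Rep H) : R :=
  Rsup (fun s => exists x y, s = opdist_l2 (mu (gmul x y)) (fun f => mu x (mu y f))).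

Definition D_l2 {G : Group} {Rep : G -> Prop} {H : Hilbert} (mu : G -> L2op Rep H) : R :=
  Rinf (fun d => exists nu, is_unitary_rep_l2 nu /\ d = dist_l2 mu nu).

(* (indu mu g f)(x) = mu(x g r(x g)^-1) (f (r (x g))) *)
Definition induce {G : Group} (Lam Rep : G -> Prop) (heR : Rep ge) {H : Hilbert}
  (mu : G -> H -> H) (g : G) : L2op Rep H :=
  fun f x =>
    let xg := gmul (proj1_sig x) g in
    let rx := retr Lam Rep heR xg in
    mu (gmul xg (ginv (proj1_sig rx))) (f rx).

(* Main.v *)
Require Import Defs.
From Stdlib Require Import Reals Lra List ClassicalEpsilon ProofIrrelevance FinFun.
Open Scope R_scope.

Lemma Ceq (a b : Defs.C) : Cre a = Cre b -> Cim a = Cim b -> a = b.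
Proof. destruct a, b; simpl; intros; subst; reflexivity. Qed.

Section Hil.
Variable H : Hilbert.

Lemma self_add_zero (y : H) : y = hadd y y -> y = hzero.
Proof.
  intro E. transitivity (hadd (hadd y y) (hopp y)).
  - rewrite <- hadd_assoc, hadd_opp, hadd_0. reflexivity.
  - rewrite <- E. apply hadd_opp.
Qed.

Lemma hadd_0_l (x : H) : hadd hzero x = x.
Proof. rewrite hadd_comm; apply hadd_0. Qed.

Lemma opp_uniq (x y : H) : hadd x y = hzero -> y = hopp x.
Proof.
  intro E. rewrite <- (hadd_0 H (hopp x)), <- E, hadd_assoc, (hadd_comm H (hopp x) x), hadd_opp, hadd_0_l.
  reflexivity.
Qed.

Lemma scal_C0 (x : H) : hscal C0 x = hzero.
Proof.
  apply self_add_zero. rewrite <- hscal_distr_s. f_equal. apply Ceq; simpl; lra.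
Qed.

Lemma scal_zero (c : Defs.C) : hscal c (@hzero H) = hzero.
Proof.
  apply self_add_zero. rewrite <- hscal_distr_v, hadd_0. reflexivity.
Qed.

Lemma opp_scal (x : H) : hopp x = hscal (mkC (-1) 0) x.
Proof.
  symmetry. apply opp_uniq. pattern x at 1. rewrite <- (hscal_1 H x).
  rewrite <- hscal_distr_s. rewrite <- (scal_C0 x). f_equal. apply Ceq; simpl; lra.
Qed.

Lemma opp_zero : hopp (@hzero H) = hzero.
Proof. symmetry; apply opp_uniq; apply hadd_0. Qed.

Definition P (x y : H) : R := Cre (hinner x y).

Lemma P_add_l x y z : P (hadd x y) z = P x z + P y z.
Proof. unfold P. rewrite hinner_add_l. reflexivity. Qed.

Lemma P_sym x y : P x y = P y x.
Proof. unfold P. rewrite hinner_conj. reflexivity. Qed.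

Lemma P_add_r x y z : P x (hadd y z) = P x y + P x z.
Proof. rewrite P_sym, P_add_l, (P_sym y), (P_sym z). reflexivity. Qed.

Lemma P_scal_l t x y : P (hscal (mkC t 0) x) y = t * P x y.
Proof. unfold P. rewrite hinner_scal_l. simpl. ring. Qed.

Lemma P_scal_r t x y : P x (hscal (mkC t 0) y) = t * P x y.
Proof. rewrite P_sym, P_scal_l, P_sym. reflexivity. Qed.

Lemma P_opp_l x y : P (hopp x) y = - P x y.
Proof. rewrite opp_scal, P_scal_l. ring. Qed.

Lemma P_opp_r x y : P x (hopp y) = - P x y.
Proof. rewrite opp_scal, P_scal_r. ring. Qed.

Lemma P_pos x : 0 <= P x x.
Proof. apply hinner_pos. Qed.

Lemma hnorm_nonneg (x : H) : 0 <= hnorm x.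
Proof. apply sqrt_pos. Qed.

Lemma hnorm_sq (x : H) : hnorm x ^ 2 = P x x.
Proof. unfold hnorm. apply pow2_sqrt. apply P_pos. Qed.

Lemma hnorm_sub_sq (x y : H) : hnorm (hsub x y) ^ 2 <= 2 * hnorm x ^ 2 + 2 * hnorm y ^ 2.
Proof.
  rewrite !hnorm_sq. unfold hsub.
  assert (Hp := P_pos (hadd x y)).
  rewrite !P_add_l, !P_add_r in *. rewrite !P_opp_l, !P_opp_r.
  rewrite (P_sym y x) in *. lra.
Qed.

Lemma P_zero : P hzero hzero = 0.
Proof.
  assert (E : P (hadd hzero hzero) hzero = P hzero hzero) by (rewrite hadd_0; reflexivity).
  rewrite P_add_l in E. lra.
Qed.

Lemma hnorm_zero : hnorm (@hzero H) = 0.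
Proof. unfold hnorm. fold (P hzero hzero). rewrite P_zero. apply sqrt_0. Qed.

Lemma hnorm_zero_inv (x : H) : hnorm x = 0 -> x = hzero.
Proof.
  intro E. apply hinner_def.
  assert (E2 : P x x = 0).
  { rewrite <- hnorm_sq, E. ring. }
  assert (E3 := hinner_conj H x x).
  apply Ceq.
  - exact E2.
  - destruct (hinner x x) as [a b]. simpl in *. injection E3. intros. simpl. lra.
Qed.

Lemma hnorm_scal (t : R) (x : H) : 0 <= t -> hnorm (hscal (mkC t 0) x) = t * hnorm x.
Proof.
  intro Ht. unfold hnorm. fold (P (hscal (mkC t 0) x) (hscal (mkC t 0) x)). fold (P x x).
  rewrite P_scal_l, P_scal_r. replace (t * (t * P x x)) with ((t*t) * P x x) by ring.
  rewrite sqrt_mult. rewrite sqrt_square by exact Ht. reflexivity.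
  nra. apply P_pos.
Qed.

Lemma scal_opp (c : Defs.C) (y : H) : hscal c (hopp y) = hopp (hscal c y).
Proof.
  apply opp_uniq. rewrite <- hscal_distr_v, hadd_opp, scal_zero. reflexivity.
Qed.

Lemma scal_sub (c : Defs.C) (x y : H) : hscal c (hsub x y) = hsub (hscal c x) (hscal c y).
Proof. unfold hsub. rewrite hscal_distr_v, scal_opp. reflexivity. Qed.

Lemma sub_zero : hsub (@hzero H) hzero = hzero.
Proof. unfold hsub. rewrite opp_zero. apply hadd_0. Qed.

Definition iso (U : H -> H) : Prop :=
  (forall a v w, U (hadd (hscal a v) w) = hadd (hscal a (U v)) (U w)) /\
  (forall v, hnorm (U v) = hnorm v).

Lemma unitary_iso U : is_unitary U -> iso U.
Proof. intros [A [B _]]. split; assumption. Qed.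

Lemma iso_zero U : iso U -> U hzero = hzero.
Proof.
  intros [L _]. apply self_add_zero.
  pattern (@hzero H) at 1. rewrite <- (hadd_0 H hzero).
  pattern (@hzero H) at 1. rewrite <- (hscal_1 H hzero).
  rewrite L, hscal_1. reflexivity.
Qed.

Lemma iso_scal U c v : iso U -> U (hscal c v) = hscal c (U v).
Proof.
  intro I. pose proof (iso_zero U I) as Z. destruct I as [L _].
  rewrite <- (hadd_0 H (hscal c v)), L, Z, hadd_0. reflexivity.
Qed.

Lemma iso_comp U V : iso U -> iso V -> iso (fun v => U (V v)).
Proof.
  intros [L1 N1] [L2 N2]. split.
  - intros. rewrite L2, L1. reflexivity.
  - intros. rewrite N1, N2. reflexivity.
Qed.

End Hil.

Lemma Rsup_lub (Q : R -> Prop) : (exists x, Q x) -> (exists B, forall x, Q x -> x <= B) ->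
  is_lub Q (Rsup Q).
Proof.
  intros Ne [B HB]. unfold Rsup. apply epsilon_spec.
  destruct (completeness Q) as [m Hm]; [exists B; exact HB | exact Ne | exists m; exact Hm].
Qed.

Lemma Rsup_ge (Q : R -> Prop) x : (exists B, forall x, Q x -> x <= B) -> Q x -> x <= Rsup Q.
Proof. intros Hb Hx. apply (Rsup_lub Q (ex_intro _ x Hx) Hb). exact Hx. Qed.

Lemma Rsup_le (Q : R -> Prop) B : (exists x, Q x) -> (forall x, Q x -> x <= B) -> Rsup Q <= B.
Proof. intros Ne Hb. apply (Rsup_lub Q Ne (ex_intro _ B Hb)). exact Hb. Qed.

Section Op.
Variable H : Hilbert.

Definition opset (A B : H -> H) : R -> Prop :=
  fun s => exists v : H, hnorm v <= 1 /\ s = hnorm (hsub (A v) (B v)).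

Lemma opset_bnd A B : iso H A -> iso H B -> forall s, opset A B s -> s <= 2.
Proof.
  intros [_ NA] [_ NB] s [v [Hv ->]].
  pose proof (hnorm_sub_sq H (A v) (B v)) as E. rewrite NA, NB in E.
  pose proof (hnorm_nonneg H v). pose proof (hnorm_nonneg H (hsub (A v) (B v))).
  simpl in E. nra.
Qed.

Lemma opset_ne A B : iso H A -> iso H B -> opset A B 0.
Proof.
  intros IA IB. exists hzero. rewrite hnorm_zero, iso_zero, (iso_zero _ B), sub_zero, hnorm_zero by assumption.
  split; lra.
Qed.

Lemma opdist_bnd A B : iso H A -> iso H B -> 0 <= opdist A B <= 2.
Proof.
  intros IA IB. unfold opdist. fold (opset A B). split.
  - apply Rsup_ge. exists 2; apply opset_bnd; auto. apply opset_ne; auto.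
  - apply Rsup_le. exists 0; apply opset_ne; auto. apply opset_bnd; auto.
Qed.

Lemma opdist_elem A B v : iso H A -> iso H B -> hnorm v <= 1 ->
  hnorm (hsub (A v) (B v)) <= opdist A B.
Proof.
  intros IA IB Hv. unfold opdist. fold (opset A B). apply Rsup_ge.
  exists 2; apply opset_bnd; auto. exists v; auto.
Qed.

Lemma opdist_ub A B v : iso H A -> iso H B ->
  hnorm (hsub (A v) (B v)) <= opdist A B * hnorm v.
Proof.
  intros IA IB.
  destruct (Req_dec (hnorm v) 0) as [Z|NZ].
  - apply hnorm_zero_inv in Z. subst v.
    rewrite iso_zero, (iso_zero _ B), sub_zero, hnorm_zero by assumption. lra.
  - pose proof (hnorm_nonneg H v) as Hn.
    set (t := / hnorm v).
    assert (Ht : 0 < t) by (unfold t; apply Rinv_0_lt_compat; lra).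
    assert (Hu : hnorm (hscal (mkC t 0) v) = 1).
    { rewrite hnorm_scal by lra. unfold t. field. exact NZ. }
    pose proof (opdist_elem A B (hscal (mkC t 0) v) IA IB (Req_le _ _ Hu)) as E.
    rewrite (iso_scal _ A), (iso_scal _ B), <- scal_sub, hnorm_scal in E by (auto; lra).
    unfold t in E.
    apply (Rmult_le_compat_r (hnorm v)) in E; [|lra].
    replace (/ hnorm v * hnorm (hsub (A v) (B v)) * hnorm v) with (hnorm (hsub (A v) (B v))) in E
      by (field; exact NZ).
    exact E.
Qed.
End Op.

Section L2.
Variable G : Group.
Variable Rep : G -> Prop.
Variable H : Hilbert.

Lemma RepT_eq (a b : RepT Rep) : proj1_sig a = proj1_sig b -> a = b.
Proof.
  destruct a as [a pa], b as [b pb]; simpl; intro E; subst. f_equal. apply proof_irrelevance.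
Qed.

Lemma proj_inj : Injective (@proj1_sig G Rep).
Proof. intros a b; apply RepT_eq. Qed.

Lemma sqsum_nonneg (f : RepT Rep -> H) l : 0 <= sqsum f l.
Proof.
  induction l; simpl. lra. pose proof (hnorm_nonneg H (f a)). nra.
Qed.

Lemma sqsum_map (s : RepT Rep -> RepT Rep) (f : RepT Rep -> H) l :
  sqsum f (map s l) = sqsum (fun z => f (s z)) l.
Proof. induction l; simpl; auto. rewrite IHl. reflexivity. Qed.

Lemma finsums_ne (f : RepT Rep -> H) : finsums f 0.
Proof. exists nil. split. constructor. reflexivity. Qed.

Lemma l2_lub (f : RepT Rep -> H) : is_l2 f -> is_lub (finsums f) (Rsup (finsums f)).
Proof. intros Hf. apply Rsup_lub. exists 0; apply finsums_ne. exact Hf. Qed.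

Lemma l2_sq (f : RepT Rep -> H) : is_l2 f -> l2norm f ^ 2 = Rsup (finsums f).
Proof.
  intros Hf. unfold l2norm. apply pow2_sqrt.
  apply (l2_lub f Hf). apply finsums_ne.
Qed.

Lemma l2_nonneg (f : RepT Rep -> H) : 0 <= l2norm f.
Proof. apply sqrt_pos. Qed.

Lemma l2_bound (f : RepT Rep -> H) s : is_l2 f -> finsums f s -> s <= l2norm f ^ 2.
Proof. intros Hf Hs. rewrite l2_sq by auto. apply (l2_lub f Hf). exact Hs. Qed.

Lemma l2_transfer (s : RepT Rep -> RepT Rep) (f g : RepT Rep -> H) c :
  Injective s -> 0 <= c -> (forall z, hnorm (g z) <= c * hnorm (f (s z))) -> is_l2 f ->
  is_l2 g /\ l2norm g <= c * l2norm f.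
Proof.
  intros Inj Hc Hp Hf.
  assert (K : forall t, finsums g t -> t <= c^2 * l2norm f ^ 2).
  { intros t [l [Nd ->]].
    assert (A : sqsum g l <= c^2 * sqsum f (map s l)).
    { rewrite sqsum_map. clear Nd. induction l; simpl. lra.
      specialize (Hp a). pose proof (hnorm_nonneg H (g a)). nra. }
    assert (B : sqsum f (map s l) <= l2norm f ^ 2).
    { apply l2_bound; auto. exists (map s l). split; auto.
      rewrite map_map. apply (Injective_map_NoDup (f := fun x => proj1_sig (s x))).
      intros x y E. apply Inj. apply proj_inj. exact E.
      apply NoDup_map_inv in Nd. exact Nd. }
    assert (0 <= c^2) by nra. nra. }
  assert (Hg : is_l2 g) by (exists (c^2 * l2norm f ^ 2); exact K).
  split; auto.
  unfold l2norm at 1.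
  assert (R1 : Rsup (finsums g) <= (c * l2norm f)^2).
  { apply Rsup_le. exists 0; apply finsums_ne. intros t Ht. specialize (K t Ht). nra. }
  apply sqrt_le_1_alt in R1. rewrite sqrt_pow2 in R1. exact R1.
  pose proof (l2_nonneg f). nra.
Qed.

Lemma l2_single (g : RepT Rep -> H) z : is_l2 g -> hnorm (g z) <= l2norm g.
Proof.
  intros Hg.
  assert (E : hnorm (g z) ^ 2 + 0 <= l2norm g ^ 2).
  { apply l2_bound; auto. exists (z :: nil). split. simpl. constructor. intros []. constructor.
    reflexivity. }
  pose proof (hnorm_nonneg H (g z)). pose proof (l2_nonneg g). nra.
Qed.

Lemma l2_zero : is_l2 (fun _ : RepT Rep => @hzero H) /\ l2norm (fun _ : RepT Rep => @hzero H) = 0.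
Proof.
  assert (Z : forall l, sqsum (fun _ : RepT Rep => @hzero H) l = 0).
  { induction l; simpl; auto. rewrite IHl, hnorm_zero. ring. }
  assert (K : forall t, finsums (fun _ : RepT Rep => @hzero H) t -> t <= 0).
  { intros t [l [_ ->]]. rewrite Z. lra. }
  split. exists 0; exact K.
  unfold l2norm. replace (Rsup _) with 0. apply sqrt_0.
  apply Rle_antisym.
  - apply Rsup_ge. exists 0; exact K. apply finsums_ne.
  - apply Rsup_le. exists 0; apply finsums_ne. exact K.
Qed.

Lemma l2_sub (f g : RepT Rep -> H) : is_l2 f -> is_l2 g -> l2norm f <= 1 -> l2norm g <= 1 ->
  l2norm (fun z => hsub (f z) (g z)) <= 2.
Proof.
  intros Hf Hg Nf Ng.
  assert (K : forall t, finsums (fun z => hsub (f z) (g z)) t -> t <= 4).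
  { intros t [l [Nd ->]].
    assert (A : sqsum (fun z => hsub (f z) (g z)) l <= 2 * sqsum f l + 2 * sqsum g l).
    { clear Nd. induction l; simpl. lra. pose proof (hnorm_sub_sq H (f a) (g a)). lra. }
    assert (B1 : sqsum f l <= l2norm f ^ 2) by (apply l2_bound; auto; exists l; auto).
    assert (B2 : sqsum g l <= l2norm g ^ 2) by (apply l2_bound; auto; exists l; auto).
    pose proof (l2_nonneg f). pose proof (l2_nonneg g). nra. }
  unfold l2norm at 1.
  assert (R1 : Rsup (finsums (fun z => hsub (f z) (g z))) <= 2 ^ 2).
  { apply Rsup_le. exists 0; apply finsums_ne. intros t Ht. specialize (K t Ht). lra. }
  apply sqrt_le_1_alt in R1. rewrite sqrt_pow2 in R1 by lra. exact R1.
Qed.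

Definition delta (w : RepT Rep) (v : H) : RepT Rep -> H :=
  fun z => if excluded_middle_informative (z = w) then v else hzero.

Lemma delta_at w v : delta w v w = v.
Proof. unfold delta. destruct (excluded_middle_informative (w = w)); congruence. Qed.

Lemma delta_l2 w v : hnorm v <= 1 -> is_l2 (delta w v) /\ l2norm (delta w v) <= 1.
Proof.
  intros Hv.
  assert (Z : forall l, ~ In w l -> sqsum (delta w v) l = 0).
  { induction l; simpl; auto. intros NI. rewrite IHl by tauto. unfold delta.
    destruct (excluded_middle_informative (a = w)). exfalso; apply NI; auto.
    rewrite hnorm_zero. ring. }
  assert (A : forall l, NoDup l -> sqsum (delta w v) l <= hnorm v ^ 2).
  { induction l; simpl; intros Nd. pose proof (hnorm_nonneg H v). nra.
    inversion Nd as [|? ? NI Nd']; subst.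
    destruct (excluded_middle_informative (a = w)) as [Ea|Ea].
    - rewrite Z. rewrite Ea, delta_at. lra. rewrite <- Ea; exact NI.
    - assert (D : delta w v a = hzero) by (unfold delta; destruct (excluded_middle_informative (a = w)); tauto).
      rewrite D, hnorm_zero. specialize (IHl Nd'). lra. }
  assert (K : forall t, finsums (delta w v) t -> t <= 1).
  { intros t [l [Nd ->]]. apply NoDup_map_inv in Nd. specialize (A l Nd).
    pose proof (hnorm_nonneg H v). nra. }
  split. exists 1; exact K.
  unfold l2norm. rewrite <- sqrt_1. apply sqrt_le_1_alt.
  apply Rsup_le. exists 0; apply finsums_ne. exact K.
Qed.
End L2.

Section Grp.
Variable G : Group.

Lemma cancel1 (a z : G) : gmul a (gmul (ginv a) z) = z.
Proof. rewrite gmul_assoc, gmul_inv_r, gmul_e_l. reflexivity. Qed.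
Lemma cancel2 (a z : G) : gmul (ginv a) (gmul a z) = z.
Proof. rewrite gmul_assoc, gmul_inv_l, gmul_e_l. reflexivity. Qed.
Lemma inv_uniq (a b : G) : gmul a b = ge -> b = ginv a.
Proof.
  intro E. rewrite <- (gmul_e_r G (ginv a)), <- E, gmul_assoc, gmul_inv_l, gmul_e_l. reflexivity.
Qed.
Lemma ginv_mul (a b : G) : ginv (gmul a b) = gmul (ginv b) (ginv a).
Proof.
  symmetry. apply inv_uniq. rewrite <- gmul_assoc, (gmul_assoc _ b), gmul_inv_r, gmul_e_l, gmul_inv_r.
  reflexivity.
Qed.
Lemma ginv_ginv (a : G) : ginv (ginv a) = a.
Proof. symmetry. apply inv_uniq. apply gmul_inv_l. Qed.
Lemma ginv_e : ginv (@ge G) = ge.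
Proof. symmetry. apply inv_uniq. apply gmul_e_l. Qed.
End Grp.

Ltac gsimpl := repeat progress (try rewrite ginv_mul; try rewrite ginv_ginv; try rewrite ginv_e;
  try rewrite <- gmul_assoc; try rewrite cancel1; try rewrite cancel2; try rewrite gmul_inv_l;
  try rewrite gmul_inv_r; try rewrite gmul_e_l; try rewrite gmul_e_r).

Section Ind.
Variable G : Group.
Variables Lam Rep : G -> Prop.
Variable Hsub : is_subgroup G Lam.
Variable Htr : is_transversal G Lam Rep.
Variable heR : Rep ge.

Lemma Lam_mul x y : Lam x -> Lam y -> Lam (gmul x y).
Proof. apply Hsub. Qed.
Lemma Lam_inv x : Lam x -> Lam (ginv x).
Proof. apply Hsub. Qed.
Lemma Lam_e : Lam ge.
Proof. apply Hsub. Qed.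
Lemma Lam_eq x y : Lam x -> x = y -> Lam y.
Proof. intros; subst; auto. Qed.

Notation rr := (retr Lam Rep heR).
Definition pr (g : G) : G := proj1_sig (rr g).

Lemma retr_spec g : Lam (gmul (pr g) (ginv g)).
Proof.
  unfold pr, retr. apply (@epsilon_spec (RepT Rep) (inhabits (exist _ ge heR)) (fun x : RepT Rep => Lam (gmul (proj1_sig x) (ginv g)))).
  destruct (Htr g) as [x [[Rx Lx] _]]. exists (exist _ x Rx). exact Lx.
Qed.

Lemma retr_spec' g : Lam (gmul g (ginv (pr g))).
Proof.
  apply (Lam_eq _ _ (Lam_inv _ (retr_spec g))). gsimpl. reflexivity.
Qed.

Lemma retr_uniq g x : Rep x -> Lam (gmul x (ginv g)) -> pr g = x.
Proof.
  intros Rx Lx. destruct (Htr g) as [y [_ U]].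
  rewrite <- (U x (conj Rx Lx)). symmetry. apply U. split. apply (proj2_sig (rr g)). apply retr_spec.
Qed.

Definition A (z : RepT Rep) (g : G) : G := gmul (gmul (proj1_sig z) g) (ginv (pr (gmul (proj1_sig z) g))).

Lemma A_Lam z g : Lam (A z g).
Proof. apply retr_spec'. Qed.

Definition sg (g : G) (z : RepT Rep) : RepT Rep := rr (gmul (proj1_sig z) g).
Definition tg (g : G) (w : RepT Rep) : RepT Rep := rr (gmul (proj1_sig w) (ginv g)).

Lemma sg_tg g w : sg g (tg g w) = w.
Proof.
  apply RepT_eq. apply retr_uniq. apply (proj2_sig w).
  apply (Lam_eq _ _ (Lam_inv _ (retr_spec (gmul (proj1_sig w) (ginv g))))).
  unfold pr. gsimpl. reflexivity.
Qed.

Lemma tg_sg g z : tg g (sg g z) = z.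
Proof.
  apply RepT_eq. apply retr_uniq. apply (proj2_sig z).
  apply (Lam_eq _ _ (Lam_inv _ (retr_spec (gmul (proj1_sig z) g)))).
  unfold sg, pr. gsimpl. reflexivity.
Qed.

Lemma sg_inj g : Injective (sg g).
Proof. intros a b E. rewrite <- (tg_sg g a), <- (tg_sg g b), E. reflexivity. Qed.
Lemma tg_inj g : Injective (tg g).
Proof. intros a b E. rewrite <- (sg_tg g a), <- (sg_tg g b), E. reflexivity. Qed.

Lemma retr_comp (z : RepT Rep) x y :
  rr (gmul (pr (gmul (proj1_sig z) x)) y) = rr (gmul (proj1_sig z) (gmul x y)).
Proof.
  apply RepT_eq. fold (pr (gmul (pr (gmul (proj1_sig z) x)) y)).
  apply retr_uniq. apply (proj2_sig (rr _)).
  apply (Lam_eq _ _ (Lam_mul _ _ (retr_spec (gmul (proj1_sig z) (gmul x y)))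
     (retr_spec' (gmul (proj1_sig z) x)))).
  gsimpl. reflexivity.
Qed.

Lemma pr_comp (z : RepT Rep) x y :
  pr (gmul (pr (gmul (proj1_sig z) x)) y) = pr (gmul (proj1_sig z) (gmul x y)).
Proof. unfold pr at 1. rewrite retr_comp. reflexivity. Qed.

Lemma A_mul z x y : A z (gmul x y) = gmul (A z x) (A (sg x z) y).
Proof.
  unfold A, sg. simpl. fold (pr (gmul (proj1_sig z) x)).
  rewrite pr_comp. gsimpl. reflexivity.
Qed.

Lemma pr_e a : Lam a -> pr (gmul ge a) = ge.
Proof.
  intro La. apply retr_uniq. exact heR.
  apply (Lam_eq _ _ (Lam_inv _ La)). gsimpl. reflexivity.
Qed.

Definition eR : RepT Rep := exist _ ge heR.

Lemma A_e a : Lam a -> A eR a = a.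
Proof. intro La. unfold A. simpl. rewrite pr_e by auto. gsimpl. reflexivity. Qed.

Lemma sg_e a : Lam a -> sg a eR = eR.
Proof. intro La. apply RepT_eq. simpl. apply (pr_e a La). Qed.

End Ind.

Section Gen.
Variable G : Group.
Variable Rep : G -> Prop.
Variable H : Hilbert.

Definition opl2set (X Y : L2op Rep H) : R -> Prop :=
  fun s => exists f, is_l2 f /\ l2norm f <= 1 /\ s = l2norm (fun x => hsub (X f x) (Y f x)).

Section Hyp.
Variables X Y : L2op Rep H.
Variable s : RepT Rep -> RepT Rep.
Variables Pz Qz : RepT Rep -> H -> H.
Variable D : R.
Hypothesis Inj : Injective s.
Hypothesis HD : 0 <= D.
Hypothesis IP : forall z, iso H (Pz z).
Hypothesis IQ : forall z, iso H (Qz z).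
Hypothesis HPQ : forall z, opdist (Pz z) (Qz z) <= D.
Hypothesis Form : forall f z, hsub (X f z) (Y f z) = hsub (Pz z (f (s z))) (Qz z (f (s z))).

Lemma opl2_diff f : is_l2 f -> l2norm f <= 1 ->
  is_l2 (fun z => hsub (X f z) (Y f z)) /\ l2norm (fun z => hsub (X f z) (Y f z)) <= D.
Proof.
  intros Hf Nf.
  destruct (l2_transfer G Rep H s f (fun z => hsub (X f z) (Y f z)) D Inj HD) as [A B]; auto.
  - intros z. rewrite Form. eapply Rle_trans. apply opdist_ub; auto.
    apply Rmult_le_compat_r. apply hnorm_nonneg. auto.
  - split; auto. eapply Rle_trans. exact B. pose proof (l2_nonneg G Rep H f). nra.
Qed.

Lemma opl2_bnd : forall t, opl2set X Y t -> t <= D.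
Proof. intros t [f [Hf [Nf ->]]]. apply opl2_diff; auto. Qed.

Lemma opl2_ne : opl2set X Y (l2norm (fun x => hsub (X (fun _ => hzero) x) (Y (fun _ => hzero) x))).
Proof.
  destruct (l2_zero G Rep H) as [Z1 Z2]. exists (fun _ => hzero). repeat split; auto. lra.
Qed.

Lemma opl2_le : opdist_l2 X Y <= D.
Proof.
  unfold opdist_l2. fold (opl2set X Y). apply Rsup_le. eexists; apply opl2_ne. apply opl2_bnd.
Qed.

Lemma opl2_nonneg : 0 <= opdist_l2 X Y.
Proof.
  unfold opdist_l2. fold (opl2set X Y). eapply Rle_trans. 2: apply Rsup_ge.
  2: exists D; apply opl2_bnd. 2: apply opl2_ne. apply l2_nonneg.
Qed.

Lemma opl2_lb z0 : opdist (Pz z0) (Qz z0) <= opdist_l2 X Y.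
Proof.
  unfold opdist. apply Rsup_le. exists 0. apply opset_ne; auto.
  intros t [v [Hv ->]].
  destruct (delta_l2 G Rep H (s z0) v Hv) as [Dl Dn].
  destruct (opl2_diff _ Dl Dn) as [Hd _].
  pose proof (l2_single G Rep H _ z0 Hd) as E. cbv beta in E. rewrite Form, delta_at in E.
  eapply Rle_trans. exact E.
  unfold opdist_l2. fold (opl2set X Y). apply Rsup_ge. exists D; apply opl2_bnd.
  exists (delta G Rep H (s z0) v). auto.
Qed.
End Hyp.

Lemma opl2_unit_bnd (X Y : L2op Rep H) : is_unitary_l2 X -> is_unitary_l2 Y ->
  0 <= opdist_l2 X Y <= 2.
Proof.
  intros [X1 [_ [X3 _]]] [Y1 [_ [Y3 _]]].
  assert (K : forall t, opl2set X Y t -> t <= 2).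
  { intros t [f [Hf [Nf ->]]]. apply l2_sub; auto; [rewrite X3 | rewrite Y3]; auto. }
  destruct (l2_zero G Rep H) as [Z1 Z2].
  assert (Ne : opl2set X Y (l2norm (fun x => hsub (X (fun _ => hzero) x) (Y (fun _ => hzero) x)))).
  { exists (fun _ => hzero). repeat split; auto. lra. }
  unfold opdist_l2. fold (opl2set X Y). split.
  - eapply Rle_trans. 2: apply Rsup_ge. 2: exists 2; exact K. 2: exact Ne. apply l2_nonneg.
  - apply Rsup_le. eexists; exact Ne. exact K.
Qed.
End Gen.

Section Main.
Variable G : Group.
Variables Lam Rep : G -> Prop.
Variable Hsub : is_subgroup G Lam.
Variable Htr : is_transversal G Lam Rep.
Variable heR : Rep ge.
Variable H : Hilbert.

Notation AA := (A G Lam Rep heR).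
Notation ss := (sg G Lam Rep heR).
Notation tt := (tg G Lam Rep heR).

Lemma ind_unfold (mu : G -> H -> H) g f z :
  induce Lam Rep heR mu g f z = mu (AA z g) (f (ss g z)).
Proof. reflexivity. Qed.

Lemma sg_comp x y z : ss y (ss x z) = ss (gmul x y) z.
Proof. unfold sg. apply retr_comp; auto. Qed.

Lemma AL z g : Lam (AA z g).
Proof. apply A_Lam; auto. Qed.

Lemma mu_iso (mu : G -> H -> H) a : maps_to_U Lam mu -> Lam a -> iso H (mu a).
Proof. intros Hm La. apply unitary_iso. apply Hm; auto. Qed.

Definition dset (mu1 mu2 : G -> H -> H) : R -> Prop :=
  fun s => exists l, Lam l /\ s = opdist (mu1 l) (mu2 l).

Lemma dset_bnd mu1 mu2 : maps_to_U Lam mu1 -> maps_to_U Lam mu2 -> forall t, dset mu1 mu2 t -> t <= 2.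
Proof. intros H1 H2 t [l [Ll ->]]. apply opdist_bnd; apply mu_iso; auto. Qed.

Lemma dset_ne mu1 mu2 : dset mu1 mu2 (opdist (mu1 ge) (mu2 ge)).
Proof. exists ge. split; auto. apply Lam_e; auto. Qed.

Lemma dist_eq (mu1 mu2 : G -> H -> H) : maps_to_U Lam mu1 -> maps_to_U Lam mu2 ->
  dist_l2 (induce Lam Rep heR mu1) (induce Lam Rep heR mu2) = dist_sub Lam mu1 mu2.
Proof.
  intros H1 H2.
  set (D := dist_sub Lam mu1 mu2).
  assert (HD : forall l, Lam l -> opdist (mu1 l) (mu2 l) <= D).
  { intros l Ll. unfold D, dist_sub. fold (dset mu1 mu2). apply Rsup_ge.
    exists 2; apply dset_bnd; auto. exists l; auto. }
  assert (D0 : 0 <= D).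
  { eapply Rle_trans. 2: apply (HD ge (Lam_e G Lam Hsub)). apply opdist_bnd; apply mu_iso; auto; apply Lam_e; auto. }
  assert (UB : forall g, opdist_l2 (induce Lam Rep heR mu1 g) (induce Lam Rep heR mu2 g) <= D).
  { intro g. apply (opl2_le G Rep H _ _ (ss g) (fun z => mu1 (AA z g)) (fun z => mu2 (AA z g)) D).
    apply sg_inj; auto. exact D0. intro; apply mu_iso; auto; apply AL.
    intro; apply mu_iso; auto; apply AL. intro z; apply HD; apply AL.
    intros f z; reflexivity. }
  apply Rle_antisym.
  - unfold dist_l2. apply Rsup_le. exists (opdist_l2 (induce Lam Rep heR mu1 ge) (induce Lam Rep heR mu2 ge)). exists ge; auto.
    intros t [g ->]. apply UB.
  - unfold D, dist_sub. fold (dset mu1 mu2). apply Rsup_le. eexists; apply dset_ne.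
    intros t [l [Ll ->]].
    pose proof (opl2_lb G Rep H (induce Lam Rep heR mu1 l) (induce Lam Rep heR mu2 l) (ss l)
      (fun z => mu1 (AA z l)) (fun z => mu2 (AA z l)) D (sg_inj G Lam Rep Hsub Htr heR l) D0
      (fun z => mu_iso _ _ H1 (AL z l)) (fun z => mu_iso _ _ H2 (AL z l))
      (fun z => HD _ (AL z l)) (fun f z => eq_refl) (eR G Rep heR)) as E.
    cbv beta in E. rewrite A_e in E by auto.
    eapply Rle_trans. exact E.
    unfold dist_l2. apply Rsup_ge. exists D. intros t [g ->]. apply UB. exists l; reflexivity.
Qed.

Definition defset (mu : G -> H -> H) : R -> Prop :=
  fun s => exists x y, Lam x /\ Lam y /\ s = opdist (mu (gmul x y)) (fun v => mu x (mu y v)).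

Lemma def_eq (mu : G -> H -> H) : maps_to_U Lam mu ->
  def_l2 (induce Lam Rep heR mu) = def_sub Lam mu.
Proof.
  intros Hm.
  set (D := def_sub Lam mu).
  assert (Bd : forall t, defset mu t -> t <= 2).
  { intros t [x [y [Lx [Ly ->]]]]. apply opdist_bnd. apply mu_iso; auto. apply Lam_mul; auto.
    apply iso_comp; apply mu_iso; auto. }
  assert (HD : forall a b, Lam a -> Lam b -> opdist (mu (gmul a b)) (fun v => mu a (mu b v)) <= D).
  { intros a b La Lb. unfold D, def_sub. fold (defset mu). apply Rsup_ge.
    exists 2; exact Bd. exists a, b; auto. }
  assert (D0 : 0 <= D).
  { eapply Rle_trans. 2: apply (HD ge ge (Lam_e G Lam Hsub) (Lam_e G Lam Hsub)).
    apply opdist_bnd. apply mu_iso; auto. apply Lam_mul; auto; apply Lam_e; auto.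
    apply iso_comp; apply mu_iso; auto; apply Lam_e; auto. }
  assert (Form : forall x y f z,
    hsub (induce Lam Rep heR mu (gmul x y) f z) ((fun f => induce Lam Rep heR mu x (induce Lam Rep heR mu y f)) f z)
    = hsub (mu (AA z (gmul x y)) (f (ss (gmul x y) z)))
           ((fun v => mu (AA z x) (mu (AA (ss x z) y) v)) (f (ss (gmul x y) z)))).
  { intros. rewrite !ind_unfold. cbv beta. rewrite sg_comp. reflexivity. }
  assert (Iso : forall x y z, iso H (mu (AA z (gmul x y))) /\
             iso H (fun v => mu (AA z x) (mu (AA (ss x z) y) v))).
  { intros. split. apply mu_iso; auto; apply AL. apply iso_comp; apply mu_iso; auto; apply AL. }
  assert (HPQ : forall x y z, opdist (mu (AA z (gmul x y))) (fun v => mu (AA z x) (mu (AA (ss x z) y) v)) <= D).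
  { intros. rewrite A_mul by auto. apply HD; apply AL. }
  assert (UB : forall x y, opdist_l2 (induce Lam Rep heR mu (gmul x y))
                 (fun f => induce Lam Rep heR mu x (induce Lam Rep heR mu y f)) <= D).
  { intros x y. apply (opl2_le G Rep H _ _ (ss (gmul x y)) (fun z => mu (AA z (gmul x y)))
       (fun z v => mu (AA z x) (mu (AA (ss x z) y) v)) D).
    apply sg_inj; auto. exact D0. intro; apply Iso. intro; apply Iso. intro; apply HPQ.
    intros; apply Form. }
  apply Rle_antisym.
  - unfold def_l2. apply Rsup_le. eexists. exists ge, ge. reflexivity.
    intros t [x [y ->]]. apply UB.
  - unfold D, def_sub. fold (defset mu). apply Rsup_le. eexists. exists ge, ge.
    split. apply Lam_e; auto. split. apply Lam_e; auto. reflexivity.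
    intros t [a [b [La [Lb ->]]]].
    pose proof (opl2_lb G Rep H (induce Lam Rep heR mu (gmul a b))
       (fun f => induce Lam Rep heR mu a (induce Lam Rep heR mu b f)) (ss (gmul a b))
       (fun z => mu (AA z (gmul a b))) (fun z v => mu (AA z a) (mu (AA (ss a z) b) v)) D
       (sg_inj G Lam Rep Hsub Htr heR _) D0
       (fun z => proj1 (Iso a b z)) (fun z => proj2 (Iso a b z))
       (fun z => HPQ a b z) (Form a b) (eR G Rep heR)) as E.
    cbv beta in E. rewrite sg_e, !A_e in E by (auto; apply Lam_mul; auto).
    eapply Rle_trans. exact E.
    unfold def_l2. apply Rsup_ge. exists D. intros t [x [y ->]]. apply UB. exists a, b; reflexivity.
Qed.

Lemma ind_unitary (nu : G -> H -> H) : maps_to_U Lam nu -> forall g, is_unitary_l2 (induce Lam Rep heR nu g).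
Proof.
  intros Hn g.
  assert (Nz : forall z v, hnorm (nu (AA z g) v) = hnorm v).
  { intros z v. destruct (Hn _ (AL z g)) as [_ [N _]]. apply N. }
  assert (T1 : forall f, is_l2 f -> is_l2 (induce Lam Rep heR nu g f) /\ l2norm (induce Lam Rep heR nu g f) <= 1 * l2norm f).
  { intros f Hf. apply (l2_transfer G Rep H (ss g)). apply sg_inj; auto. lra.
    intro z. rewrite ind_unfold, Nz. lra. exact Hf. }
  split; [|split; [|split]].
  - intros f Hf. apply T1; auto.
  - intros a f h Hf Hh x. rewrite !ind_unfold. destruct (Hn _ (AL x g)) as [L _]. apply L.
  - intros f Hf. apply Rle_antisym.
    + destruct (T1 f Hf) as [_ E]. lra.
    + destruct (l2_transfer G Rep H (tt g) (induce Lam Rep heR nu g f) f 1) as [_ E].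
      apply tg_inj; auto. lra.
      intro z. rewrite ind_unfold, Nz, sg_tg by auto. lra. apply T1; auto. lra.
  - intros h Hh.
    set (f := fun w => epsilon (inhabits (@hzero H)) (fun v => nu (AA (tt g w) g) v = h (tt g w))).
    assert (Sp : forall w, nu (AA (tt g w) g) (f w) = h (tt g w)).
    { intro w. unfold f. apply (@epsilon_spec H (inhabits hzero) (fun v => nu (AA (tt g w) g) v = h (tt g w))).
      destruct (Hn _ (AL (tt g w) g)) as [_ [_ S]]. apply S. }
    exists f. split.
    + apply (l2_transfer G Rep H (tt g) h f 1). apply tg_inj; auto. lra.
      intro w. rewrite <- Sp, Nz. lra. exact Hh.
    + intro x. rewrite ind_unfold. rewrite <- (tg_sg G Lam Rep Hsub Htr heR g x) at 1 3.
      rewrite Sp. reflexivity.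
Qed.

Lemma ind_rep (nu : G -> H -> H) : is_unitary_rep_sub Lam nu -> is_unitary_rep_l2 (induce Lam Rep heR nu).
Proof.
  intros [Hn Hr]. split. apply ind_unitary; auto.
  intros x y f _ z. rewrite !ind_unfold, sg_comp, A_mul by auto. apply Hr; apply AL.
Qed.

Lemma id_rep : is_unitary_rep_sub Lam (fun (_ : G) (v : H) => v).
Proof.
  split. intros l _. split; [|split]; auto. intros w; exists w; auto. auto.
Qed.

Lemma D_le (mu : G -> H -> H) : maps_to_U Lam mu ->
  D_l2 (induce Lam Rep heR mu) <= D_sub Lam mu.
Proof.
  intros Hm. unfold D_l2, D_sub, Rinf. apply Ropp_le_contravar.
  assert (Pos : forall nu', is_unitary_rep_l2 nu' -> 0 <= dist_l2 (induce Lam Rep heR mu) nu').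
  { intros nu' [U' _].
    assert (B : forall t, (exists g, t = opdist_l2 (induce Lam Rep heR mu g) (nu' g)) -> t <= 2).
    { intros t [g ->]. apply opl2_unit_bnd. apply ind_unitary; auto. apply U'. }
    unfold dist_l2. eapply Rle_trans. 2: apply Rsup_ge. 2: exists 2; exact B. 2: exists ge; reflexivity.
    apply opl2_unit_bnd. apply ind_unitary; auto. apply U'. }
  apply Rsup_le.
  - exists (- dist_sub Lam mu (fun _ v => v)). exists (fun _ v => v). split. apply id_rep. ring.
  - intros x [nu [Hnu E]]. apply Rsup_ge.
    + exists 0. intros y [nu' [Hnu' E']]. pose proof (Pos nu' Hnu'). lra.
    + exists (induce Lam Rep heR nu). split. apply ind_rep; auto.
      rewrite dist_eq; auto. apply Hnu.
Qed.
End Main.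

Theorem lemma1p4 (G : Group) (Lam : G -> Prop) (Rep : G -> Prop)
  (Hsub : is_subgroup G Lam) (Htr : is_transversal G Lam Rep) (heR : Rep ge)
  (H : Hilbert) (mu mu1 mu2 : G -> H -> H)
  (Hmu : maps_to_U Lam mu) (Hmu1 : maps_to_U Lam mu1) (Hmu2 : maps_to_U Lam mu2) :
  def_l2 (induce Lam Rep heR mu) = def_sub Lam mu /\
  dist_l2 (induce Lam Rep heR mu1) (induce Lam Rep heR mu2) = dist_sub Lam mu1 mu2 /\
  D_l2 (induce Lam Rep heR mu) <= D_sub Lam mu.
Proof.
  split; [|split].
  - apply def_eq; auto.
  - apply dist_eq; auto.
  - apply D_le; auto.
Qed.
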